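(* Let $G=(V,E)$ be a finite, connected, simple graph with at least two vertices and generic weights $(w_x)_{x\in\Sigma}$, $\Sigma=V\cup E$; let $M$ be the ground state and let $S\subset\Sigma$ be such that no element of $S$ belongs to $M$. Consider new weights $w'_y\ge w_y$ for $y\in S$ and $w'_y=w_y$ for $y\notin S$. Then the ground state for the new weights is still $M$, and for every $x\in\Sigma$ the flexibility $F_G(x)$ computed with the new weights is at least the flexibility $F_G(x)$ computed with the old weights.
   Context: A matching of $G$ is a set $M\subset\Sigma$ such that every vertex either belongs to $M$ or is an endpoint of exactly one edge of $M$, but not both. $H(M)=\sum_{z\in M}w_z$; the ground state is the matching minimising $H$. Weights are generic if no nontrivial integer combination of finitely many weights vanishes. For $x\in\Sigma$, $M_{G,x,1}$ (resp. $M_{G,x,0}$) is the minimal-weight matching among those containing $x$ (resp. not containing $x$); $K_{G,x}=H(M_{G,x,0})-H(M_{G,x,1})+w_x$ and the flexibility is $F_G(x)=|K_{G,x}-w_x|$, all relative to the given weights. *)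

(* Defs.v *)
From HB Require Import structures.
From mathcomp Require Import all_boot all_order all_algebra.
Set Implicit Arguments. Unset Strict Implicit. Unset Printing Implicit Defensive.
Import Order.TTheory GRing.Theory Num.Theory.
Local Open Scope ring_scope.

(* A simple graph is a symmetric irreflexive relation e on a finType V.
   An edge is a 2-element vertex set {u, v} with e u v. *)
Definition is_edge (V : finType) (e : rel V) (A : {set V}) : bool :=
  [exists u, exists v, e u v && (A == [set u; v])].

Definition edge (V : finType) (e : rel V) := {A : {set V} | is_edge e A}.

Definition Sigma (V : finType) (e : rel V) : finType := (V + edge e)%type.

Definition edeg (V : finType) (e : rel V) (M : {set Sigma e}) (v : V) : nat :=
  #|[set E : edge e | (inr E \in M) && (v \in val E)]|.

Definition is_matching (V : finType) (e : rel V) (M : {set Sigma e}) : bool :=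
  [forall v : V, ((inl v \in M) && (edeg M v == 0%N))
                 || ((inl v \notin M) && (edeg M v == 1%N))].

Definition Hw (R : realFieldType) (V : finType) (e : rel V)
  (w : Sigma e -> R) (M : {set Sigma e}) : R := \sum_(z in M) w z.

Definition generic (R : realFieldType) (V : finType) (e : rel V)
  (w : Sigma e -> R) : Prop :=
  forall c : Sigma e -> int, (exists z, c z != 0) ->
    \sum_(z : Sigma e) (c z)%:~R * w z != 0.

Definition ground_state (R : realFieldType) (V : finType) (e : rel V)
  (w : Sigma e -> R) (M : {set Sigma e}) : Prop :=
  is_matching M /\
  forall M' : {set Sigma e}, is_matching M' -> M' != M -> Hw w M < Hw w M'.

(* minimal value of H among matchings satisfying P (0 if there is none) *)
Definition Hmin (R : realFieldType) (V : finType) (e : rel V)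
  (w : Sigma e -> R) (P : pred {set Sigma e}) : R :=
  if [pick M | is_matching M && P M] is Some M0 then
    \big[Num.min/Hw w M0]_(M | is_matching M && P M) Hw w M
  else 0.

Definition H1 (R : realFieldType) (V : finType) (e : rel V)
  (w : Sigma e -> R) (x : Sigma e) : R := Hmin w (fun M => x \in M).
Definition H0 (R : realFieldType) (V : finType) (e : rel V)
  (w : Sigma e -> R) (x : Sigma e) : R := Hmin w (fun M => x \notin M).

Definition Kx (R : realFieldType) (V : finType) (e : rel V)
  (w : Sigma e -> R) (x : Sigma e) : R := H0 w x - H1 w x + w x.

Definition flex (R : realFieldType) (V : finType) (e : rel V)
  (w : Sigma e -> R) (x : Sigma e) : R := `|Kx w x - w x|.

(* Main.v *)
Require Import Defs.
From HB Require Import structures.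
From mathcomp Require Import all_boot all_order all_algebra.
Import Order.TTheory GRing.Theory Num.Theory.
Local Open Scope ring_scope.

Section H.
Variables (R : realFieldType) (V : finType) (e : rel V).

Lemma Hmin_lb (w : Sigma e -> R) (P : pred {set Sigma e}) M :
  is_matching M -> P M -> Hmin w P <= Hw w M.
Proof.
move=> hm hp; rewrite /Hmin; case: pickP => [M0 _|/(_ M)]; last by rewrite hm hp.
by rewrite (bigD1 M) ?hm ?hp //= ge_min lexx.
Qed.

Lemma Hmin_ge (w : Sigma e -> R) (P : pred {set Sigma e}) c M0 :
  is_matching M0 -> P M0 ->
  (forall M, is_matching M -> P M -> c <= Hw w M) -> c <= Hmin w P.
Proof.
move=> hm hp H; rewrite /Hmin; case: pickP => [M1 /andP[h1 h2]|/(_ M0)];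
  last by rewrite hm hp.
apply: (big_ind (fun r => c <= r)); first exact: H.
  by move=> x y hx hy; rewrite le_min hx hy.
by move=> M /andP[]; apply: H.
Qed.

Lemma Hmin_none (w w' : Sigma e -> R) (P : pred {set Sigma e}) :
  (forall M, is_matching M -> P M -> False) -> Hmin w P = Hmin w' P.
Proof.
move=> H; rewrite /Hmin; case: pickP => [M /andP[h1 h2]|_]; first by case: (H M).
by [].
Qed.

Lemma Hmin_mono (w w' : Sigma e -> R) (P : pred {set Sigma e}) :
  (forall y, w y <= w' y) -> Hmin w P <= Hmin w' P.
Proof.
move=> hw.
case: (boolP [exists M, is_matching M && P M]) =>
  [/existsP[M0 /andP[hm hp]]|hn].
  apply: (Hmin_ge w' P _ M0 hm hp) => M h1 h2; apply: le_trans (Hmin_lb w P M h1 h2) _.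
  by apply: ler_sum => y _; apply: hw.
rewrite (Hmin_none w w') //= => M h1 h2; move/existsP: hn; apply; exists M.
by rewrite h1.
Qed.
End H.
Arguments Hmin_ge {R V e}.
Arguments Hmin_lb {R V e}.

Lemma absmono (R : realFieldType) (a b c : R) :
  c <= a -> a <= b -> `|a - c| <= `|b - c|.
Proof.
move=> ca ab; rewrite !ger0_norm ?subr_ge0 ?lerD2r //; exact: le_trans ab.
Qed.

Theorem lemma2p13 (R : realFieldType) (V : finType) (e : rel V)
  (e_sym : symmetric e) (e_irr : irreflexive e)
  (e_conn : forall u v : V, connect e u v) (two_vertices : (1 < #|V|)%N)
  (w w' : Sigma e -> R) (w_gen : generic w)
  (M S : {set Sigma e}) (hM : ground_state w M) (hSM : [disjoint S & M])
  (hS : forall y, y \in S -> w y <= w' y)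
  (hnS : forall y, y \notin S -> w' y = w y) :
  ground_state w' M /\ (forall x : Sigma e, flex w x <= flex w' x).
Proof.
have hww : forall y, w y <= w' y.
  by move=> y; case: (boolP (y \in S)) => [/hS //|/hnS ->].
have hMS : forall z, z \in M -> w' z = w z.
  by move=> z hz; apply: hnS; rewrite (disjointFl hSM hz).
have HwM : Hw w' M = Hw w M by apply: eq_bigr => z hz; apply: hMS.
have gs' : ground_state w' M.
  split; first exact: hM.1.
  move=> M' h1 h2; rewrite HwM; apply: lt_le_trans (hM.2 M' h1 h2) _.
  by apply: ler_sum => y _; apply: hww.
have Heq : forall ww : Sigma e -> R, ground_state ww M -> forall P : pred {set Sigma e},
    P M -> Hmin ww P = Hw ww M.
  move=> ww; rewrite /ground_state => -[hm hlt] P hp; apply/le_anti; rewrite Hmin_lb //=.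
  apply: (Hmin_ge ww P _ M hm hp) => M' h1 _.
  by case: (eqVneq M' M) => [->//|/(hlt M' h1)/ltW].
have Hcmp : forall P : pred {set Sigma e},
    Hw w M <= Hmin w P \/ Hmin w P = Hmin w' P.
  move=> P; case: (boolP [exists M', is_matching M' && P M']) =>
    [/existsP[M0 /andP[hm hp]]|hn].
    left; apply: (Hmin_ge w P _ M0 hm hp) => M' h1 _.
    by case: (eqVneq M' M) => [->//|/(hM.2 M' h1)/ltW].
  right; apply: Hmin_none => M' h1 h2; move/existsP: hn; apply; exists M'.
  by rewrite h1.
split=> // x; rewrite /flex /Kx !addrK.
case: (boolP (x \in M)) => xM.
  rewrite /H1 !Heq // HwM.
  case: (Hcmp (fun M => x \notin M)) => [h|h]; last by have h0 : H0 w x = H0 w' x := h; rewrite h0.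
  apply: absmono => //; exact: Hmin_mono.
rewrite /H0 !Heq // HwM [`|_ - H1 w x|]distrC [`|_ - H1 w' x|]distrC.
case: (Hcmp (fun M => x \in M)) => [h|h]; last by have h0 : H1 w x = H1 w' x := h; rewrite h0.
apply: absmono => //; exact: Hmin_mono.
Qed.
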